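(* Let $X$ be a compact metric space and $f\colon X\to X$ continuous. Then $(X,f)$ has property $P_e$ if and only if $(X,f)$ has $\gamma$-restricted two-sided orbital limit shadowing.
   Context: A full trajectory is a sequence $\langle x_i\rangle_{i\in\mathbb Z}$ in $X$ with $f(x_i)=x_{i+1}$ for all $i\in\mathbb Z$. For a two-sided sequence $\langle x_i\rangle_{i\in\mathbb Z}$ in $X$, $\omega(\langle x_i\rangle)=\bigcap_{M\in\mathbb N}\overline{\{x_n: n>M\}}$ and $\alpha(\langle x_i\rangle)=\bigcap_{M\in\mathbb N}\overline{\{x_n: n<-M\}}$. A set $A\subseteq X$ is internally chain transitive if for all $a,b\in A$ and every $\delta>0$ there is a finite sequence $x_0=a,x_1,\dots,x_N=b$ in $A$ with $N\ge1$ and $d(f(x_i),x_{i+1})<\delta$ for all $i<N$; $ICT_f$ denotes the set of nonempty closed internally chain transitive subsets of $X$. Property $P_e$: for every $A\in ICT_f$ there is a full trajectory $\langle x_i\rangle_{i\in\mathbb Z}$ with $\alpha(\langle x_i\rangle)=\omega(\langle x_i\rangle)=A$. A two-sided asymptotic pseudo-orbit is a sequence $\langle x_i\rangle_{i\in\mathbb Z}$ with $d(f(x_i),x_{i+1})\to0$ as $i\to\pm\infty$. $(X,f)$ has $\gamma$-restricted two-sided orbital limit shadowing if for every two-sided asymptotic pseudo-orbit $\langle x_i\rangle_{i\in\mathbb Z}$ with $\alpha(\langle x_i\rangle)=\omega(\langle x_i\rangle)$ there is a full trajectory $\langle z_i\rangle_{i\in\mathbb Z}$ with $\alpha(\langle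 z_i\rangle)=\alpha(\langle x_i\rangle)$ and $\omega(\langle z_i\rangle)=\omega(\langle x_i\rangle)$. *)

(* Defs.v *)
From HB Require Import structures.
From mathcomp Require Import all_boot all_order all_algebra.
From mathcomp Require Import all_classical all_reals all_analysis.

Set Implicit Arguments. Unset Strict Implicit. Unset Printing Implicit Defensive.
Import Order.TTheory GRing.Theory Num.Theory.
Local Open Scope classical_set_scope.
Local Open Scope ring_scope.

Section Dyn.
Variables (R : realType) (X : pseudoMetricType R) (f : X -> X).

(* "d(x, y) < e" is rendered as  ball x e y. *)

Definition full_trajectory (x : int -> X) : Prop :=
  forall i : int, f (x i) = x (i + 1).

Definition omega_lim (x : int -> X) : set X :=
  \bigcap_(M in [set: nat]) closure [set x n | n in [set n : int | M%:Z < n]].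

Definition alpha_lim (x : int -> X) : set X :=
  \bigcap_(M in [set: nat]) closure [set x n | n in [set n : int | n < - M%:Z]].

Definition int_chain_transitive (A : set X) : Prop :=
  forall a b, A a -> A b -> forall delta : R, 0 < delta ->
    exists (N : nat) (x : nat -> X),
      (1 <= N)%N /\ x 0%N = a /\ x N = b /\
      (forall i, (i <= N)%N -> A (x i)) /\
      (forall i, (i < N)%N -> ball (f (x i)) delta (x i.+1)).

Definition ICT (A : set X) : Prop :=
  A !=set0 /\ closed A /\ int_chain_transitive A.

Definition property_Pe : Prop :=
  forall A, ICT A -> exists x : int -> X,
    full_trajectory x /\ alpha_lim x = A /\ omega_lim x = A.

Definition two_sided_asymptotic_pseudo_orbit (x : int -> X) : Prop :=
  forall eps : R, 0 < eps -> exists M : nat,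
    forall i : int, (M%:Z < i \/ i < - M%:Z) -> ball (f (x i)) eps (x (i + 1)).

Definition gamma_restricted_two_sided_orbital_limit_shadowing : Prop :=
  forall x : int -> X, two_sided_asymptotic_pseudo_orbit x ->
    alpha_lim x = omega_lim x ->
    exists z : int -> X, full_trajectory z /\
      alpha_lim z = alpha_lim x /\ omega_lim z = omega_lim x.

End Dyn.

(* Main.v *)
Require Import Defs.
From HB Require Import structures.
From mathcomp Require Import all_boot all_order all_algebra finmap.
From mathcomp Require Import all_classical all_reals all_analysis.
From mathcomp Require Import lra zify.
Import Order.TTheory GRing.Theory Num.Theory.
Local Open Scope classical_set_scope.
Local Open Scope ring_scope.

Section Gen.
Variables (R : realType) (X : pseudoMetricType R).

Lemma closure_ballP (S : set X) p :
  closure S p <-> forall r : R, 0 < r -> exists y, S y /\ ball p r y.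
Proof.
split.
  move=> cS r r0; have [y [Sy By]] := cS _ (nbhsx_ballx p r r0).
  by exists y.
move=> H B /nbhs_ballP [r r0 sB]; have [y [Sy By]] := H r r0.
by exists y; split => //; apply: sB.
Qed.

Lemma exists_inv_lt (r : R) : 0 < r -> exists k : nat, k.+1%:R^-1 < r.
Proof.
move=> r0; have [N _ HN] := near_infty_natSinv_lt (PosNum r0).
by exists N; apply: HN => /=.
Qed.

Lemma inv_le (m n : nat) : (m <= n)%N -> n.+1%:R^-1 <= m.+1%:R^-1 :> R.
Proof.
move=> mn; rewrite lef_pV2 ?posrE ?ltr0Sn // ler_nat; by [].
Qed.

Lemma inv_gt0 (n : nat) : 0 < n.+1%:R^-1 :> R.
Proof. by rewrite invr_gt0 ltr0Sn. Qed.

Hypothesis cX : compact [set: X].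

Lemma nested_cluster (B : nat -> set X) :
  (forall m n, (m <= n)%N -> B n `<=` B m) -> (forall n, B n !=set0) ->
  exists p : X, forall n V, nbhs p V -> B n `&` V !=set0.
Proof.
move=> Bdec Bne.
pose F := filter_from [set: nat] B.
have FF : Filter F.
  apply: filter_from_filter; first by exists 0%N.
  move=> i j _ _; exists (maxn i j) => //.
  by move=> y By; split; apply: (Bdec _ (maxn i j)) => //; rewrite ?leq_maxl ?leq_maxr.
have PF : ProperFilter F by apply: filter_from_proper.
have [|p [_ clp]] := cX F PF; first by apply: filterT.
exists p => n V nV; apply: clp => //; by exists n.
Qed.


Variables (f : X -> X) (hf : continuous f).

Lemma unif_cont (e : R) : 0 < e ->
  exists2 d : R, 0 < d & forall u v, ball u d v -> ball (f u) e (f v).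
Proof.
move=> e0; apply: contrapT => H.
pose B n := [set u | exists v, ball u n.+1%:R^-1 v /\ ~ ball (f u) e (f v)].
have [|n|p Hp] := nested_cluster B.
- move=> m n mn u [v [uv nuv]]; exists v; split => //.
  by move: uv; apply: le_ball; apply: inv_le.
- apply: contrapT => Hn; apply: H; exists n.+1%:R^-1; first exact: inv_gt0.
  move=> u v uv; apply: contrapT => nuv; apply: Hn; exists u; by exists v.
have e20 : 0 < e / 2 by rewrite divr_gt0.
have := hf p; move/cvg_ballP => /(_ _ e20) /nbhs_ballP [r r0 sr].
have r20 : 0 < r / 2 by rewrite divr_gt0.
have [n hn] := exists_inv_lt _ r20.
have [u [[v [uv nuv]] pu]] := Hp n _ (nbhsx_ballx p _ r20).
apply: nuv.
have pv : ball p r v.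
  rewrite [r]splitr; apply: ball_triangle pu _.
  by move: uv; apply: le_ball; apply: ltW.
have pu' : ball p r u.
  by move: pu; apply: le_ball; move: r0 => /= r0; lra.
have := sr _ pu'; have := sr _ pv => /= hv hu.
exact: ball_splitr hu hv.
Qed.

Lemma eventually_in (x : int -> X) (U : set X) : open U ->
  omega_lim x `<=` U -> exists M : nat, forall n : int, M%:Z < n -> U (x n).
Proof.
move=> oU sU; apply: contrapT => H.
pose B (M : nat) := [set x n | n in [set n : int | M%:Z < n /\ ~ U (x n)]].
have [|M|p Hp] := nested_cluster B.
- move=> m n mn _ [i [ni nUi] <-]; exists i => //; split => //.
  by apply: le_lt_trans ni; rewrite lez_nat.
- apply: contrapT => HM; apply: H; exists M => n Mn; apply: contrapT => nU.
  by apply: HM; exists (x n); exists n.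
have op : omega_lim x p.
  move=> M _ V nV; have [_ [[i [Mi _] <-] Vi]] := Hp M V nV.
  by exists (x i); split => //; exists i.
have nU : nbhs p U by apply: open_nbhs_nbhs; split => //; apply: sU.
by have [_ [[i [_ nUi] <-] Ui]] := Hp 0%N U nU.
Qed.


Lemma PoszS (k : nat) : (Posz k + 1 = Posz k.+1)%R.
Proof. by rewrite -addn1 PoszD. Qed.

Lemma omega_ICT (x : int -> X) : two_sided_asymptotic_pseudo_orbit f x ->
  ICT f (omega_lim x).
Proof.
move=> asym; split.
  apply: contrapT => ne.
  have [|M HM] := @eventually_in x set0 open0.
    by move=> p op; apply: ne; exists p.
  by apply: (HM (M.+1)%:Z); rewrite ltz_nat.
split; first by apply: closed_bigI => M _; exact: closed_closure.
move=> a b oa ob δ δ0.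
have d30 : 0 < δ / 3 by rewrite divr_gt0.
have [η0 η00 uc] := unif_cont _ d30.
pose η := Num.min η0 (δ / 3).
have η0' : 0 < η by rewrite lt_min η00 d30.
have ηle0 : η <= η0 by rewrite ge_min lexx.
have ηle3 : η <= δ / 3 by rewrite ge_min lexx orbT.
pose U := \bigcup_(c in omega_lim x) (ball c η)°.
have oU : open U by apply: bigcup_open => c _; exact: open_interior.
have sU : omega_lim x `<=` U.
  by move=> c oc; exists c => //; exact: nbhsx_ballx.
have [M2 HM2] := eventually_in x U oU sU.
have [M1 HM1] := asym η η0'.
pose M := maxn M1 M2.
have [_ [[m Mm <-] am]] := (closure_ballP _ _).1 (oa M I) η η0'.
have m0 : (0 <= m)%R by apply: le_trans (ltW Mm).
case: m m0 Mm am => // m' _ Mm am.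
have [_ [[n mn <-] bn]] := (closure_ballP _ _).1 (ob m' I) η η0'.
have n0 : (0 <= n)%R by apply: le_trans (ltW mn).
case: n n0 mn bn => // n' _ mn bn.
move: Mm mn => /= Mm mn; rewrite ltz_nat in Mm; rewrite ltz_nat in mn.
have Hex : forall k : int, exists c,
    omega_lim x c /\ (M2%:Z < k -> ball c η (x k)).
  move=> k.
  case: (pselect (M2%:Z < k)) => [Mk|nMk]; last by exists a.
  have [c' oc' ic'] := HM2 k Mk.
  by exists c'; split => // _; apply: nbhs_singleton.
have [c Hc] := choice Hex.
pose N := (n' - m')%N.
pose y (i : nat) := if (i == 0)%N then a else if (i == N) then b else c (Posz (m' + i)).
have HN : (m' + N = n')%N by rewrite /N subnKC // ltnW.
have Hy : forall i, (i <= N)%N -> omega_lim x (y i) /\ ball (y i) η (x (Posz (m' + i))).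
  move=> i iN; rewrite /y; case: eqP => [->|i0]; first by rewrite addn0.
  case: eqP => [->|iN']; first by rewrite HN.
  have [Hc1 Hc2] := Hc (Posz (m' + i)); split => //; apply: Hc2.
  rewrite ltz_nat; apply: (leq_trans _ (leq_addr i m')).
  by apply: leq_ltn_trans Mm; rewrite leq_maxr.
exists N, y; split; first by rewrite /N subn_gt0.
split; first by rewrite /y eqxx.
split.
  rewrite /y eqxx; case: eqP => [N0|//]; exfalso.
  by move: mn; rewrite -HN N0 addn0 ltnn.
split; first by move=> i iN; exact: (Hy i iN).1.
move=> i iN.
have [_ h1] := Hy i (ltnW iN).
have [_ h3] := Hy i.+1 iN.
have h1' : ball (f (y i)) (δ / 3) (f (x (Posz (m' + i)))).
  by apply: uc; move: h1; apply: le_ball.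
have h2 : ball (f (x (Posz (m' + i)))) η (x (Posz (m' + i) + 1)).
  apply: HM1; left; rewrite ltz_nat; apply: (leq_trans _ (leq_addr i m')).
  by apply: leq_ltn_trans Mm; rewrite leq_maxl.
rewrite PoszS -addnS in h2.
have := ball_triangle (ball_triangle h1' h2) (ball_sym h3).
by apply: le_ball; lra.
Qed.

End Gen.
Arguments exists_inv_lt {R r}.
Arguments inv_le {R m n}.
Arguments closure_ballP {R X S p}.

Section Machine.
Variables (T : Type) (B : nat -> seq T) (a : T).
Hypothesis Bne : forall k, (0 < size (B k))%N.

Definition step (st : nat * seq T) : nat * seq T :=
  let: (k, l) := st in
  if l is _ :: ((_ :: _) as l') then (k, l') else (k.+1, B k.+1).

Fixpoint stt (n : nat) : nat * seq T :=
  if n is n'.+1 then step (stt n') else (0%N, B 0%N).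

Fixpoint TT (k : nat) : nat := if k is k'.+1 then (TT k' + size (B k'))%N else 0%N.

Lemma stt_suffix n : exists pre, pre ++ (stt n).2 = B (stt n).1 /\ (0 < size (stt n).2)%N.
Proof.
elim: n => [|n [pre [Hpre Hs]]] /=; first by exists [::]; split => //.
move: Hpre Hs; case: (stt n) => k [|y [|z l']] //= Hpre _.
  by exists [::]; split => //.
exists (rcons pre y); split => //; by rewrite cat_rcons.
Qed.

Lemma stt_step1 n : ((stt n.+1).1 = (stt n).1 \/ (stt n.+1).1 = (stt n).1.+1).
Proof. by rewrite /=; case: (stt n) => k [|y [|z l']] /=; auto. Qed.

Lemma stt_mono m n : (m <= n)%N -> ((stt m).1 <= (stt n).1)%N.
Proof.
move=> /subnK <-; elim: (n - m)%N => [|d IH] //.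
rewrite addSn; case: (stt_step1 (d + m)) => ->; first by [].
exact: (leq_trans IH).
Qed.

Lemma stt_pos k r : (r < size (B k))%N -> stt (TT k + r)%N = (k, drop r (B k)).
Proof.
elim: k r => [|k IHk] r.
  elim: r => [|r IHr] hr; first by rewrite /= drop0.
  rewrite add0n /= in IHr *; rewrite IHr ?(ltnW hr) //.
  by rewrite (drop_nth a (ltnW hr)) (drop_nth a hr) /=.
elim: r => [|r IHr] hr.
  rewrite addn0 /=.
  have hs := Bne k.
  have -> : (TT k + size (B k) = (TT k + (size (B k)).-1).+1)%N.
    by rewrite -addnS prednK.
  have hp : ((size (B k)).-1 < size (B k))%N by rewrite prednK.
  by rewrite /= (IHk _ hp) (drop_nth a hp) /= drop_oversize ?prednK // drop0.
rewrite addnS /= IHr ?(ltnW hr) //.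
by rewrite (drop_nth a (ltnW hr)) (drop_nth a hr) /=.
Qed.

Lemma TT_ge k : (k <= TT k)%N.
Proof. elim: k => //= k IH; rewrite -addn1 leq_add //. Qed.

Lemma stt_ge K n : (TT K <= n)%N -> (K <= (stt n).1)%N.
Proof.
move=> Kn; have := stt_mono _ _ Kn; rewrite -[TT K]addn0 stt_pos //.
Qed.

Lemma stt_nth k j : (j < size (B k))%N -> head a (stt (TT k + j)%N).2 = nth a (B k) j.
Proof. by move=> hj; rewrite stt_pos //= -nth0 nth_drop addn0. Qed.

Lemma stt_in (P : T -> Prop) : (forall k i, P (nth a (B k) i)) -> forall n, P (head a (stt n).2).
Proof.
move=> HP n; have [pre [Hpre Hs]] := stt_suffix n.
have := HP (stt n).1 (size pre); rewrite -Hpre nth_cat ltnn subnn nth0.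
by [].
Qed.

End Machine.
Arguments stt {T} B n.
Arguments TT {T} B k.
Arguments stt_suffix {T B} Bne n.
Arguments stt_mono {T B m n}.
Arguments stt_pos {T B} a Bne k r _.
Arguments TT_ge {T B} Bne k.
Arguments stt_ge {T B} a Bne K n _.
Arguments stt_nth {T B} a Bne k j _.
Arguments stt_in {T B} a Bne P _ n.

Section Chains.
Variables (R : realType) (X : pseudoMetricType R) (f : X -> X).

Fixpoint chn (δ : R) (l : seq X) (v : X) : Prop :=
  if l is y :: l' then ball (f y) δ (head v l') /\ chn δ l' v else True.

Lemma chn_cat δ l1 l2 v : chn δ (l1 ++ l2) v <-> chn δ l1 (head v l2) /\ chn δ l2 v.
Proof.
elim: l1 => [|y l1 IH] /=; first by split => // -[].
have -> : head v (l1 ++ l2) = head (head v l2) l1 by case: l1 {IH}.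
rewrite IH; tauto.
Qed.

Fixpoint pref (y : nat -> X) (N : nat) : seq X :=
  if N is N'.+1 then y 0%N :: pref (fun i => y i.+1) N' else [::].

Lemma size_pref y N : size (pref y N) = N.
Proof. by elim: N y => //= N IH y; rewrite IH. Qed.

Lemma nth_pref d y N i : (i < N)%N -> nth d (pref y N) i = y i.
Proof. by elim: N y i => //= N IH y [|i] //= hi; rewrite IH. Qed.

Lemma head_pref y N : head (y N) (pref y N) = y 0%N.
Proof. by case: N. Qed.

Lemma pref_chn δ N y : (forall i, (i < N)%N -> ball (f (y i)) δ (y i.+1)) ->
  chn δ (pref y N) (y N).
Proof.
elim: N y => //= N IH y H; split.
  by rewrite (head_pref (fun i => y i.+1)); apply: H.
by apply: (IH (fun i => y i.+1)) => i hi; apply: H.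
Qed.

Variables (A : set X) (a : X).
Hypotheses (Aa : A a) (ictA : int_chain_transitive f A).

Lemma loop δ : 0 < δ -> forall m (h : nat -> X) u v, A u -> A v ->
  (forall i, (i < m)%N -> A (h i)) ->
  exists l : seq X, [/\ head a l = u, (0 < size l)%N, forall i, A (nth a l i),
    chn δ l v & forall i, (i < m)%N -> exists2 j, (j < size l)%N & nth a l j = h i].
Proof.
move=> δ0; elim => [|m IH] h u v Au Av Ah.
  have [N [y [N1 [y0 [yN [yA ych]]]]]] := ictA _ _ Au Av _ δ0.
  exists (pref y N); split => //.
  - by case: N N1 {yN yA ych} => //= N _; rewrite y0.
  - by rewrite size_pref.
  - move=> i; case: (ltnP i N) => hi; first by rewrite nth_pref //; apply: yA; apply: ltnW.
    by rewrite nth_default // size_pref.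
  - by rewrite -yN; apply: pref_chn.
have [N [y [N1 [y0 [yN [yA ych]]]]]] := ictA _ _ Au (Ah 0%N isT) _ δ0.
have [l2 [h2 s2 A2 c2 t2]] := IH (fun i => h i.+1) (h 0%N) v (Ah 0%N isT) Av (fun i hi => Ah i.+1 hi).
have hl2 : head v l2 = h 0%N by case: l2 h2 s2 {A2 c2 t2}.
exists (pref y N ++ l2); split.
- by case: N N1 {yN yA ych} => //= N _; rewrite y0.
- by rewrite size_cat addn_gt0 s2 orbT.
- move=> i; rewrite nth_cat size_pref; case: (ltnP i N) => hi //.
  by rewrite nth_pref //; apply: yA; apply: ltnW.
- apply/chn_cat; split => //; rewrite hl2 -yN; exact: pref_chn.
- case=> [|i] hi.
    exists N; first by rewrite size_cat size_pref -{1}[N]addn0 ltn_add2l.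
    by rewrite nth_cat size_pref ltnn subnn nth0.
  have [j hj <-] := t2 i hi.
  exists (N + j)%N; first by rewrite size_cat size_pref ltn_add2l.
  by rewrite nth_cat size_pref ltnNge leq_addr /= addKn.
Qed.

End Chains.
Arguments chn {R X} f δ l v.
Arguments loop {R X f A a} Aa ictA {δ} δ0 m h u v.


Section Net.
Variables (R : realType) (X : pseudoMetricType R) (a : X).
Definition pX : Type := X.
HB.instance Definition _ := PseudoMetric.copy pX X.
HB.instance Definition _ := isPointed.Build pX a.

Lemma net (A : set X) : compact A -> forall η : R, 0 < η ->
  exists m (h : nat -> X), (forall i, (i < m)%N -> A (h i)) /\
    forall p, A p -> exists2 i, (i < m)%N & ball (h i) η p.
Proof.
move=> cA η η0.
have cA' : @cover_compact pX A by rewrite -compact_cover.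
have [|D' sD' cD'] := cA' pX A (fun c : pX => interior (ball c η)) (fun _ _ => open_interior _).
  by move=> p Ap; exists p => //; exact: nbhsx_ballx.
exists (size (enum_fset D')), (fun i => nth a (enum_fset D') i); split.
  move=> i hi; have : nth a (enum_fset D') i \in D' by exact: mem_nth.
  by move/sD'; rewrite inE.
move=> p /cD' [c /= cD cp].
exists (index c (enum_fset D')); first by rewrite index_mem.
rewrite nth_index //; exact: nbhs_singleton cp.
Qed.
End Net.

Section Constr.
Variables (R : realType) (X : pseudoMetricType R).

Lemma omega_eq (x : int -> X) (A : set X) : closed A -> (forall i, A (x i)) ->
  (forall p, A p -> forall (M : nat) (r : R), 0 < r ->
     exists n : int, M%:Z < n /\ ball p r (x n)) -> omega_lim x = A.
Proof.
move=> clA xA H; apply/seteqP; split.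
  move=> p op; apply: clA; apply/closure_ballP => r r0.
  have /closure_ballP := op 0%N I => /(_ r r0) [_ [[n _ <-] bn]].
  by exists (x n).
move=> p Ap M _; apply/closure_ballP => r r0.
have [n [Mn bn]] := H p Ap M r r0; exists (x n); split => //; by exists n.
Qed.

Lemma alpha_eq (x : int -> X) (A : set X) : closed A -> (forall i, A (x i)) ->
  (forall p, A p -> forall (M : nat) (r : R), 0 < r ->
     exists n : int, n < - M%:Z /\ ball p r (x n)) -> alpha_lim x = A.
Proof.
move=> clA xA H; apply/seteqP; split.
  move=> p op; apply: clA; apply/closure_ballP => r r0.
  have /closure_ballP := op 0%N I => /(_ r r0) [_ [[n _ <-] bn]].
  by exists (x n).
move=> p Ap M _; apply/closure_ballP => r r0.
have [n [Mn bn]] := H p Ap M r r0; exists (x n); split => //; by exists n.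
Qed.

Lemma NegzS (k : nat) : (Negz k.+1 + 1 = Negz k)%R.
Proof. by rewrite !NegzE -addn1 PoszD opprD addrK. Qed.

Variables (f : X -> X).
Hypothesis cX : compact [set: X].
Variables (A : set X) (a : X).
Hypotheses (Aa : A a) (clA : closed A) (ictA : int_chain_transitive f A).

Let δ (k : nat) : R := k.+1%:R^-1.

Lemma block_ex k : exists l : seq X, [/\ head a l = a, (0 < size l)%N,
  forall i, A (nth a l i), chn f (δ k) l a &
  forall p, A p -> exists2 j, (j < size l)%N & ball (nth a l j) (δ k) p].
Proof.
have cA : compact A by apply: (subclosed_compact clA cX).
have [m [h [Ah cov]]] := @net _ _ a A cA _ (inv_gt0 R k).
have [l [h1 s1 A1 c1 t1]] := loop Aa ictA (inv_gt0 R k) m h a a Aa Aa Ah.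
exists l; split => // p Ap.
have [i hi bi] := cov p Ap; have [j hj ej] := t1 i hi.
by exists j => //; rewrite ej.
Qed.

Lemma construct : exists x : int -> X,
  [/\ two_sided_asymptotic_pseudo_orbit f x, alpha_lim x = A & omega_lim x = A].
Proof.
have [b Hb] := choice block_ex.
have bne : forall k, (0 < size (b k))%N by move=> k; have [] := Hb k.
pose B' k := rev (b k).
have B'ne : forall k, (0 < size (B' k))%N by move=> k; rewrite size_rev.
pose s n := head a (stt b n).2.
pose t n := head a (stt B' n).2.
pose x (i : int) := match i with Posz n => s n | Negz m => t m end.
have sA : forall n, A (s n).
  by apply: (stt_in a bne A) => k i; have [] := Hb k.
have tA : forall n, A (t n).
  apply: (stt_in a B'ne A) => k i; rewrite /B'.
  case: (ltnP i (size (b k))) => hi; last by rewrite nth_default ?size_rev.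
  by rewrite nth_rev //; have [] := Hb k.
have spos : forall n, ball (f (s n)) (δ (stt b n).1) (s n.+1).
  move=> n; have [pre [Hpre Hs]] := stt_suffix bne n.
  rewrite /s /=; move: Hpre Hs; case: (stt b n) => k [|y l'] //= Hpre _.
  have [_ _ _ ch _] := Hb k; rewrite -Hpre in ch.
  have [_ /= [hy _]] := (@chn_cat _ _ f _ _ _ _).1 ch.
  case: l' hy {Hpre ch} => [|z l''] //= hy.
  by have [-> _ _ _ _] := Hb k.+1.
have tneg : forall n, ball (f (t n.+1)) (δ (stt B' n).1) (t n).
  move=> n; have [pre [Hpre Hs]] := stt_suffix B'ne n.
  rewrite /t /=; move: Hpre Hs; case: (stt B' n) => k [|y l'] //= Hpre _.
  case: l' Hpre => [|z l''] Hpre /=.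
    have ya : y = a.
      have [h0 _ _ _ _] := Hb k; rewrite -h0.
      by rewrite -[b k]revK -/(B' k) -Hpre rev_cat.
    rewrite ya /B'.
    have [_ s1 _ ch1 _] := Hb k.+1; move: s1 ch1.
    case/lastP: (b k.+1) => [|L0 w] // _; rewrite -cats1 => ch1.
    have [_ /= [hw _]] := (@chn_cat _ _ f _ _ _ _).1 ch1.
    rewrite rev_cat /=; move: hw; apply: le_ball; exact: inv_le.
  have E : b k = rev l'' ++ z :: y :: rev pre.
    by rewrite -[b k]revK -/(B' k) -Hpre rev_cat !rev_cons -!cats1 -!catA.
  have [_ _ _ ch _] := Hb k; rewrite E in ch.
  by have [_ /= [hz _]] := (@chn_cat _ _ f _ _ _ _).1 ch.
exists x; split.
- move=> eps eps0; have [K hK] := exists_inv_lt eps0.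
  exists (maxn (TT b K) (TT B' K)).+1 => -[n|m] [Hi|Hi].
  + rewrite PoszS /=; move: (spos n); apply: le_ball.
    apply: le_trans (ltW hK); apply: inv_le; apply: (stt_ge a) => //.
    rewrite ltz_nat in Hi; lia.
  + by rewrite ltzN_nat in Hi.
  + by rewrite NegzE ltzN_nat in Hi.
  + rewrite NegzE ltrN2 ltz_nat in Hi.
    case: m Hi => [|m'] Hi; first by lia.
    rewrite NegzS /=; move: (tneg m'); apply: le_ball.
    apply: le_trans (ltW hK); apply: inv_le; apply: (stt_ge a) => //.
    lia.
- apply: alpha_eq => //; first by case.
  move=> p Ap M r r0; have [k0 hk0] := exists_inv_lt r0.
  pose k := maxn k0 M.
  have [_ _ _ _ cov] := Hb k; have [j hj bj] := cov p Ap.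
  pose j' := (size (b k) - j.+1)%N.
  have hj' : (j' < size (B' k))%N by rewrite size_rev /j'; lia.
  exists (Negz (TT B' k + j')); split.
    rewrite NegzE ltrN2 ltz_nat; have := TT_ge B'ne k; lia.
  rewrite /= /t (stt_nth a B'ne) // /B' nth_rev; last by move: hj'; rewrite size_rev.
  have -> : (size (b k) - (size (b k) - j.+1).+1 = j)%N by lia.
  move: (ball_sym bj); apply: le_ball.
  apply: le_trans (ltW hk0); apply: inv_le; lia.
- apply: omega_eq => //; first by case.
  move=> p Ap M r r0; have [k0 hk0] := exists_inv_lt r0.
  pose k := maxn k0 M.+1.
  have [_ _ _ _ cov] := Hb k; have [j hj bj] := cov p Ap.
  exists (Posz (TT b k + j)); split.
    rewrite ltz_nat; have := TT_ge bne k; lia.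
  rewrite /= /s (stt_nth a bne) //.
  move: (ball_sym bj); apply: le_ball.
  apply: le_trans (ltW hk0); apply: inv_le; lia.
Qed.

End Constr.
Local Close Scope ring_scope.

Theorem mainTheorem1 (R : realType) (X : pseudoMetricType R)
  (hX : hausdorff_space X) (cX : compact [set: X])
  (f : X -> X) (hf : continuous f) :
  property_Pe f <-> gamma_restricted_two_sided_orbital_limit_shadowing f.
Proof.
split.
  move=> Pe x asym eqax.
  have ict := @omega_ICT R X cX f hf x asym.
  have [z [fz [az oz]]] := Pe _ ict.
  by exists z; split => //; split => //; rewrite az eqax.
move=> S A [[a Aa] [clA ictA]].
have [x [asym ax ox]] := @construct R X f cX A a Aa clA ictA.
have [|z [fz [az oz]]] := S x asym; first by rewrite ax ox.
by exists z; split => //; rewrite az oz ax ox.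
Qed.
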